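(* Let $\mathcal M$ be a valid catalytic machine, $x$ an input and $\tau$ an initial catalytic tape, and let $\langle\pi,u\rangle$ be any vertex of $\mathcal G_{\mathcal M,x,\tau}$. Then $\langle\pi,u\rangle\in V(\mathcal G^0_{\mathcal M,x}(\mathrm{acc}_\tau))\cup V(\mathcal G^0_{\mathcal M,x}(\mathrm{rej}_\tau))$.
   Context: A catalytic machine with work space $s$ and catalytic space $c$ has a read-only input tape holding $x$, a work tape of length $s$ initialized to $0^s$, a catalytic tape of length $c$ initialized to arbitrary $\tau$; non-deterministic/randomized machines have at each step a 0-choice and a 1-choice of transition (deterministic transitions count as both). It is valid if for every $x,\tau$ and every sequence of choices it halts in finite time with catalytic tape $\tau$. All auxiliary configuration information (state, head positions) is recorded on the work tape, so configurations are pairs $\langle\pi,u\rangle$ ($\pi\in\{0,1\}^c$ catalytic content, $u\in\{0,1\}^s$ work content); the start configuration is $\langle\tau,0^s\rangle$, the unique accepting halt configuration is $\mathrm{acc}_\tau=\langle\tau,1\,1\,0^{s-2}\rangle$ and the unique rejecting halt configuration is $\mathrm{rej}_\tau=\langle\tau,1\,0\,0^{s-2}\rangle$. The configuration graph $\mathcal G_{\mathcal M,x}$ has configurations as vertices and a directed edge $v\to v'$ when $v'$ is reachable from $v$ in one step, labeled by the choice bit(s). $\mathcal G_{\mathcal M,x,\tau}$ is the subgraph induced on configurations reachable from $\langle\tau,0^s\rangle$. The $0$-graph $\mathcal G^0_{\mathcal M,x}$ is the undirected graph retaining only edges labeled $0$ with directions forgotten, and $\mathcal G^0_{\mathcal M,x}(v)$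 is the connected component containing $v$. *)

(* Defs.v *)
From mathcomp Require Import all_boot.
Set Implicit Arguments. Unset Strict Implicit. Unset Printing Implicit Defensive.

Definition ctape (c : nat) := {ffun 'I_c -> bool}.
Definition wtape (s : nat) := {ffun 'I_s -> bool}.

(* A configuration <pi, u>; all auxiliary info (state, heads) lives in u. *)
Definition config (c s : nat) := (ctape c * wtape s)%type.

Definition zero_work (s : nat) : wtape s := [ffun _ => false].
Definition halt_work (s : nat) (b : bool) : wtape s :=
  [ffun i : 'I_s => if val i == 0 then true else if val i == 1 then b else false].

Definition start_cfg c s (tau : ctape c) : config c s := (tau, zero_work s).
Definition acc_cfg c s (tau : ctape c) : config c s := (tau, halt_work s true).
Definition rej_cfg c s (tau : ctape c) : config c s := (tau, halt_work s false).

Definition halting c s (v : config c s) : bool :=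
  (v.2 == halt_work s true) || (v.2 == halt_work s false).

(* A (nondeterministic/randomized) catalytic machine with work space s and
   catalytic space c: on input x, from a non-halting configuration v,
   choice bit b leads to configuration  M x v b  (a deterministic transition
   is one where M x v true = M x v false). *)
Definition machine (c s : nat) := seq bool -> config c s -> bool -> config c s.

Fixpoint run c s (M : machine c s) (x : seq bool) (v : config c s)
    (f : nat -> bool) (n : nat) : config c s :=
  match n with
  | 0 => v
  | n'.+1 => let w := run M x v f n' in
             if halting w then w else M x w (f n')
  end.

Definition valid c s (M : machine c s) : Prop :=
  forall (x : seq bool) (tau : ctape c) (f : nat -> bool),
    exists n, halting (run M x (start_cfg s tau) f n) /\
              (run M x (start_cfg s tau) f n).1 = tau.

(* Vertices of G_{M,x,tau}: configurations reachable from <tau,0^s>. *)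
Definition reachable c s (M : machine c s) x (tau : ctape c) (v : config c s)
  : Prop := exists (f : nat -> bool) (n : nat), run M x (start_cfg s tau) f n = v.

Definition edge0 c s (M : machine c s) x : rel (config c s) :=
  fun v w => ~~ halting v && (M x v false == w).

(* The 0-graph G^0_{M,x}: 0-labeled edges with directions forgotten. *)
Definition graph0 c s (M : machine c s) x : rel (config c s) :=
  fun v w => edge0 M x v w || edge0 M x w v.

Definition comp0 c s (M : machine c s) x (v : config c s) : pred (config c s) :=
  fun w => connect (graph0 M x) v w.

(* Main.v *)
Require Import Defs.
From mathcomp Require Import all_boot.

Lemma run_ext c s (M : machine c s) x v (f g : nat -> bool) n :
  (forall i, i < n -> f i = g i) -> run M x v f n = run M x v g n.
Proof.
elim: n => [//|n IH] H /=.
rewrite IH; last by move=> i Hi; apply: H; apply: ltnW.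
by rewrite H.
Qed.

Lemma run_add c s (M : machine c s) x v f n k :
  run M x v f (n + k) = run M x (run M x v f n) (fun i => f (n + i)) k.
Proof. by elim: k => [|k IH] /=; rewrite ?addn0 // addnS /= IH. Qed.

Lemma run_frozen c s (M : machine c s) x v f k :
  halting v -> run M x v f k = v.
Proof. by move=> H; elim: k => [//|k IH] /=; rewrite IH H. Qed.

Lemma run_connect c s (M : machine c s) x v k :
  connect (graph0 M x) v (run M x v (fun _ => false) k).
Proof.
elim: k => [|k IH] /=; first exact: connect0.
case: ifP => // Hh.
apply: connect_trans IH _; apply: connect1.
by rewrite /graph0 /edge0 Hh eqxx.
Qed.

Lemma halt_eq c s (tau : ctape c) (w : config c s) :
  halting w -> w.1 = tau -> (w = acc_cfg s tau) \/ (w = rej_cfg s tau).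
Proof.
case: w => a b; rewrite /halting /= => /orP [] /eqP -> ->; [left|right]; done.
Qed.

Theorem lemma4p8 (c s : nat) (M : machine c s) (hM : valid M)
  (x : seq bool) (tau : ctape c) (v : config c s) :
  reachable M x tau v ->
  (v \in comp0 M x (acc_cfg s tau)) || (v \in comp0 M x (rej_cfg s tau)).
Proof.
case=> f [n Hv].
pose g i := if i < n then f i else false.
have Hg : run M x (start_cfg s tau) g n = v.
  by rewrite -Hv; apply: run_ext => i Hi; rewrite /g Hi.
have [N [HN1 HN2]] := hM x tau g.
have Hsym : connect_sym (graph0 M x).
  by apply: sym_connect_sym => a b; rewrite /graph0 orbC.
have key : forall w, (w = acc_cfg s tau \/ w = rej_cfg s tau) ->
    connect (graph0 M x) v w ->
    (v \in comp0 M x (acc_cfg s tau)) || (v \in comp0 M x (rej_cfg s tau)).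
  move=> w [] -> Hc; apply/orP; [left|right];
    by rewrite /comp0 unfold_in Hsym Hc.
case: (leqP N n) => HNn.
  have E : v = run M x (start_cfg s tau) g N.
    by rewrite -Hg -(subnKC HNn) run_add run_frozen.
  apply: (key v); first by rewrite E; apply: halt_eq.
  exact: connect0.
have E : run M x (start_cfg s tau) g N = run M x v (fun _ => false) (N - n).
  rewrite -(subnKC (ltnW HNn)) run_add Hg subnKC ?(ltnW HNn) //.
  apply: run_ext => i _; rewrite /g.
  by rewrite ltnNge leq_addr.
apply: (key _ (halt_eq _ _ _ _ HN1 HN2)).
rewrite E; exact: run_connect.
Qed.
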